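(* Let $G$ be a maximal $1$-plane graph with at least $4$ vertices in which every edge lies in some $K_4$-subgraph, and let $\{G_i\}_{i\in\{0,\dots,N\}}$ be a $K_4$-extension sequence of $G$ determined by the SWM*-rule, with $G_i=G[V(G_{i-1})\cup V(F_i)]$. For $i\in\{1,\dots,N\}$ let $F_i'$ be the subgraph of $G_i$ induced by the edge set $E(G_i)\setminus E(G_{i-1})$. Let $i\in\{1,\dots,N\}$ and $e\in E(F_i)$. Then every cut-vertex $w$ of $F_i'-e$ lies in $V(F_i)\setminus V(G_{i-1})$, and each component of $F_i'-e-w$ contains vertices of $G_{i-1}$.
   Context: A $1$-plane graph is a simple graph drawn in the plane (vertices distinct points, edges arcs joining their ends, no edge crossing itself, two edges crossing at most once, adjacent edges not crossing) so that every edge is crossed at most once; it is maximal if no edge joining two non-adjacent vertices can be added so that the result is still a simple $1$-plane graph. An edge is clean if it crosses no other edge. If edge $ux$ crosses another edge at point $\alpha$, the arc $u\alpha$ is the near half-edge of $ux$ incident with $u$. Two edge segments are consecutive on the boundary of a face if they are consecutive on one of the closed walks forming that boundary. $G[A]$ is the subgraph induced by $A$ (a vertex set), and for an edge set $A$, the subgraph induced by $A$ has edge set $A$ and vertex set the ends of edges in $A$. For a vertex-induced subgraph $G'$ and a $K_4$-subgraph $F$ of $G$ with $1\le|V(F)\cap V(G')|\le 3$, $F$ is a strong/weak/micro $K_4$-link from $G'$ when $|V(F)\cap V(G')|=3/2/1$, and $G[V(G')\cup V(F)]$ is the corresponding $K_4$-extension of $G'$. SWM*-rule for a proper vertex-induced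 subgraph $G'$: choose any strong $K_4$-link from $G'$ if one exists; otherwise any weak one if one exists; otherwise choose $u\in V(G')$ with $N_G(u)\not\subseteq V(G')$, then $x\in N_G(u)\setminus V(G')$ such that for some $w\in N_G(u)\cap V(G')$ the edge $ux$ (or its near half-edge at $u$) and $uw$ (or its near half-edge at $u$) are consecutive on the boundary of some face of $G$; if $ux$ is clean choose any $K_4$-subgraph containing $ux$, and if $ux$ crosses edge $st$ choose $G[\{u,x,s,t\}]$. A $K_4$-extension sequence determined by the SWM*-rule is $G_0\cong K_4$, $G_N=G$, $G_i=G[V(G_{i-1})\cup V(F_i)]$ with $F_i$ a $K_4$-link from $G_{i-1}$ chosen by the SWM*-rule. *)

(* Defs.v *)
From mathcomp Require Import all_boot.
Set Implicit Arguments. Unset Strict Implicit. Unset Printing Implicit Defensive.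

Definition simple_graph (V : finType) (adj : rel V) : Prop :=
  (forall x, ~~ adj x x) /\ (forall x y, adj x y = adj y x).

(* K is the vertex set of a K4-subgraph (in a simple graph the K4-subgraph is
   determined by its 4 vertices; its edges are the 6 pairs). *)
Definition isK4 (V : finType) (adj : rel V) (K : {set V}) : Prop :=
  #|K| = 4 /\ {in K &, forall x y, x != y -> adj x y}.

(* 1-plane drawings, encoded combinatorially by the planarization: the       *)
(* planar map obtained by turning every crossing point into a degree-4 node. *)
(* Darts D; al = the fixed-point-free involution pairing the two darts of a  *)
(* planarization edge; sg = rotation (next dart counter-clockwise around the *)
(* node); nd d = Some v if the node of d is the vertex v, None if it is a    *)
(* crossing point.  Faces = orbits of phi = sg \o al.                        *)
Section Drawing.
Variables (V D : finType) (adj : rel V) (al sg : D -> D) (nd : D -> option V).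

Definition phi (d : D) : D := sg (al d).

Definition norb (f : D -> D) : nat := #|[set [set y | fconnect f x y] | x : D]|.

(* far end (a vertex of G) of the edge of G whose near part at the node of d
   is the dart d; d is assumed to sit at a vertex node *)
Definition far (d : D) : option V :=
  if nd (al d) is Some x then Some x else nd (al (sg (sg (al d)))).

(* the edge of G through the dart d (at a vertex) is clean *)
Definition clean_dart (d : D) : bool := nd (al d) != None.

Definition on_face (x : V) (d : D) : Prop :=
  exists d', nd d' = Some x /\ fconnect phi d d'.

Definition one_plane : Prop :=
  [/\ (* planar map of genus 0, connected *)
      [/\ (forall d, al (al d) = d), (forall d, al d != d),
      injective sg,
      (forall d d', connect (fun x y => (y == al x) || (y == sg x)) d d') &
      norb sg + norb phi = #|D|./2 + 2],
      (* nodes: vertices correspond exactly to the sg-orbits labelled Some *)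
      [/\ forall d, nd (sg d) = nd d,
          forall d d' v, nd d = Some v -> nd d' = Some v -> fconnect sg d d' &
          forall v, exists d, nd d = Some v],
      (* crossing nodes: degree 4, adjacent (in the planarization) to vertices
         only, the two crossing edges have four distinct ends *)
      (forall d, nd d = None ->
         [/\ sg (sg (sg (sg d))) = d, sg d != d, sg (sg d) != d,
             (forall k, k < 4 -> nd (al (iter k sg d)) != None) &
             uniq [seq nd (al (iter k sg d)) | k <- iota 0 4]]) &
      (* the edges of G are exactly the edges of the drawing, without
         multiple edges *)
      (forall u x, adj u x <-> exists d, nd d = Some u /\ far d = Some x) /\
      (forall d d' u, nd d = Some u -> nd d' = Some u -> far d = far d' -> d = d')].

(* Maximality: no edge xy between distinct non-adjacent vertices can be added
   keeping a simple 1-plane graph.  Such an edge can be added iff either x and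
   y lie on a common face (clean new edge), or the new edge can cross exactly
   one clean edge st with {s,t} disjoint from {x,y}, passing from a face on
   one side of st containing x to the face on the other side containing y. *)
Definition maximal_one_plane : Prop :=
  one_plane /\
  forall x y, x != y -> ~~ adj x y ->
    ~ (exists d, on_face x d /\ on_face y d) /\
    ~ (exists d s t, [/\ nd d = Some s, nd (al d) = Some t,
                         x \notin [:: s; t], y \notin [:: s; t] &
                         on_face x d /\ on_face y (al d)]).

Definition strong_link (S F : {set V}) : Prop := isK4 adj F /\ #|F :&: S| = 3.
Definition weak_link (S F : {set V}) : Prop := isK4 adj F /\ #|F :&: S| = 2.
Definition K4_link (S F : {set V}) : Prop :=
  isK4 adj F /\ 1 <= #|F :&: S| <= 3.

(* micro step of the SWM*-rule: u in S, x a neighbour of u outside S, w a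
   neighbour of u in S such that the darts (edges or near half-edges) of ux
   and uw at u are consecutive in the rotation at u, i.e. consecutive on the
   boundary walk of the face containing that corner; if ux is clean F is any
   K4 containing u and x, otherwise F = {u,x,s,t} where st crosses ux. *)
Definition micro_choice (S F : {set V}) : Prop :=
  exists u x w d1 d2,
    [/\ [&& u \in S, x \notin S & w \in S],
        [/\ nd d1 = Some u, far d1 = Some x, nd d2 = Some u & far d2 = Some w],
        (d2 = sg d1 \/ d1 = sg d2) &
        (if clean_dart d1 then u \in F /\ x \in F
         else exists s t, [/\ nd (al (sg (al d1))) = Some s,
                              nd (al (sg (sg (sg (al d1))))) = Some t &
                              F = [set u; x; s; t]])].

Definition swm_rule (S F : {set V}) : Prop :=
  K4_link S F /\
  [\/ #|F :&: S| = 3,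
      #|F :&: S| = 2 /\ ~ (exists F', strong_link S F') |
      [/\ ~ (exists F', strong_link S F'), ~ (exists F', weak_link S F')
        & micro_choice S F]].

(* K4-extension sequence determined by the SWM*-rule, given by the vertex
   sets S i = V(G_i) and the links F i (i = 1..N). *)
Definition swm_sequence (N : nat) (S F : nat -> {set V}) : Prop :=
  [/\ isK4 adj (S 0), S N = [set: V] &
      forall i, 1 <= i <= N -> S i = S i.-1 :|: F i /\ swm_rule (S i.-1) (F i)].

End Drawing.

(* Components and cut-vertices of a graph given by a vertex set A and an     *)
(* edge relation r (only edges with both ends in A are used).               *)
Definition rel_in (V : finType) (A : {set V}) (r : rel V) : rel V :=
  fun u v => [&& u \in A, v \in A & r u v].

Definition components (V : finType) (A : {set V}) (r : rel V) : {set {set V}} :=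
  [set [set y in A | connect (rel_in A r) x y] | x in A].

Definition cut_vertex (V : finType) (A : {set V}) (r : rel V) (w : V) : Prop :=
  w \in A /\ #|components A r| < #|components (A :\ w) r|.

(* F_i' : the subgraph induced by the edge set E(G_i) \ E(G_{i-1}) *)
Definition new_edge (V : finType) (adj : rel V) (Sold Snew : {set V}) : rel V :=
  fun x y => [&& adj x y, x \in Snew, y \in Snew & ~~ ((x \in Sold) && (y \in Sold))].

Definition new_verts (V : finType) (adj : rel V) (Sold Snew : {set V}) : {set V} :=
  [set x | [exists y, new_edge adj Sold Snew x y]].

Definition new_edge_minus (V : finType) (adj : rel V) (Sold Snew : {set V})
  (a b : V) : rel V :=
  fun x y => new_edge adj Sold Snew x y && ([set x; y] != [set a; b]).

(* Main.v *)
Require Import Defs.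
From mathcomp Require Import all_boot.
From mathcomp Require Import zify.

Theorem lemma4p4 (V D : finType) (adj : rel V) (al sg : D -> D)
  (nd : D -> option V)
  (N : nat) (S F : nat -> {set V}) (i : nat) (a b w : V) :
  simple_graph adj ->
  maximal_one_plane adj al sg nd ->
  4 <= #|V| ->
  (forall x y, adj x y -> exists K, isK4 adj K /\ x \in K /\ y \in K) ->
  swm_sequence adj al sg nd N S F ->
  1 <= i <= N ->
  a \in F i -> b \in F i -> a != b ->
  cut_vertex (new_verts adj (S i.-1) (S i))
             (new_edge_minus adj (S i.-1) (S i) a b) w ->
  w \in F i :\: S i.-1 /\
  (forall C, C \in components (new_verts adj (S i.-1) (S i) :\ w)
                              (new_edge_minus adj (S i.-1) (S i) a b) ->
             C :&: S i.-1 != set0).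
Proof.
move=> [_ adj_sym] _ _ _ [_ _ hseq] hi _ _ _ [wA hcut].
have [hSnew [[hK4 /andP [hP1 hP3]] _]] := hseq i hi.
move: wA hcut.
set Sold := S i.-1. set Snew := S i. set FF := F i.
move: hSnew hK4 hP1 hP3.
rewrite -/Sold -/Snew -/FF.
move=> hSnew [hF4 adjF] hP1 hP3.
set A := new_verts adj Sold Snew.
set r := new_edge_minus adj Sold Snew a b.
move=> wA hcut.
have r_sym : symmetric r.
  move=> x y; rewrite /r /new_edge_minus /new_edge adj_sym.
  have -> : [set y; x] = [set x; y] by rewrite setUC.
  by case: (x \in Snew); case: (y \in Snew); case: (x \in Sold); case: (y \in Sold).
have rin_sym : forall B : {set V}, symmetric (rel_in B r).
  move=> B x y; rewrite /rel_in r_sym.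
  by case: (x \in B); case: (y \in B).
have cS : forall B : {set V}, connect_sym (rel_in B r).
  by move=> B; apply: sym_connect_sym.
have edge_conn : forall (B : {set V}) u v, u \in B -> v \in B -> adj u v ->
    u \in Snew -> v \in Snew -> ~~ ((u \in Sold) && (v \in Sold)) ->
    [set u; v] != [set a; b] -> connect (rel_in B r) u v.
  move=> B u v uB vB huv uS vS hn hne; apply: connect1.
  by rewrite /rel_in uB vB /r /new_edge_minus /new_edge huv uS vS hn hne.
have inA : forall v y, new_edge adj Sold Snew v y -> v \in A.
  by move=> v y h; rewrite inE; apply/existsP; exists y.
have A_Snew : forall v, v \in A -> v \in Snew.
  by move=> v; rewrite inE => /existsP [y /and4P [_ ? _ _]].
have F_Snew : forall v, v \in FF -> v \in Snew.
  by move=> v hv; rewrite hSnew in_setU hv orbT.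
have nS_X : forall v, v \in Snew -> v \notin Sold -> v \in FF :\: Sold.
  move=> v; rewrite hSnew in_setU => /orP [->//|hv] hn.
  by rewrite in_setD hn hv.
have cardPX : #|FF :&: Sold| + #|FF :\: Sold| = 4 by rewrite cardsID.
have [x0 x0X] : exists x, x \in FF :\: Sold.
  apply/set0Pn; rewrite -card_gt0; lia.
have [p0 p0P] : exists p, p \in FF :&: Sold.
  apply/set0Pn; rewrite -card_gt0; lia.
have F_A : forall v, v \in FF -> v \in A.
  move=> v vF; case vS: (v \in Sold).
  - move: x0X; rewrite in_setD => /andP [x0S x0F].
    apply: (inA v x0); rewrite /new_edge adjF ?F_Snew ?vS ?x0F //=.
    by apply/eqP => e; move: x0S; rewrite -e vS.
  - move: p0P; rewrite in_setI => /andP [p0F p0S].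
    apply: (inA v p0); rewrite /new_edge adjF ?F_Snew ?vS ?p0F //=.
    by apply/eqP => e; move: vS; rewrite e p0S.
have pair_ne : forall u v x y : V, v \notin [set x; y] -> [set u; v] != [set x; y].
  move=> u v x y hv; apply/eqP => e; move: hv; rewrite -e.
  by rewrite !inE eqxx orbT.
have pair_ne' : forall u v x y : V, u \notin [set x; y] -> [set u; v] != [set x; y].
  move=> u v x y hv; apply/eqP => e; move: hv; rewrite -e.
  by rewrite !inE eqxx.

have stepX : forall u y, u \notin FF :\: Sold -> r u y -> y \in FF :\: Sold.
  move=> u y uX; rewrite /r /new_edge_minus /new_edge => /andP [/and4P [_ uS yS hn] _].
  case uSo: (u \in Sold); last by move: uX; rewrite nS_X // uSo.
  by apply: nS_X => //; move: hn; rewrite uSo.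
have Xconn : forall u, u \notin FF :\: Sold ->
    {in FF :\: Sold &, forall x y, connect (rel_in (A :\ u) r) x y}.
  move=> u uX x y xX yX.
  have XA : forall z, z \in FF :\: Sold -> z \in A :\ u.
    move=> z zX; rewrite in_setD1 F_A; last by move: zX; rewrite in_setD => /andP [].
    by rewrite andbT; apply/eqP => e; move: uX; rewrite -e zX.
  have XF : forall z, z \in FF :\: Sold -> z \in FF.
    by move=> z; rewrite in_setD => /andP [].
  have XnS : forall z, z \in FF :\: Sold -> z \notin Sold.
    by move=> z; rewrite in_setD => /andP [].
  case: (eqVneq x y) => [->|xy]; first exact: connect0.
  have XnSf : forall z, z \in FF :\: Sold -> (z \in Sold) = false.
    by move=> z /XnS /negbTE.
  have xA := XA x xX; have yA := XA y yX; have xF := XF x xX; have yF := XF y yX.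
  have xS := XnSf x xX; have yS := XnSf y yX.
  case: (boolP ([set x; y] != [set a; b])) => [hne|].
    by apply: edge_conn; rewrite ?xA ?yA ?xS ?yS ?adjF ?F_Snew ?xF ?yF.
  rewrite negbK => /eqP E.
  case: (set0Pn (FF :\: Sold :\ x :\ y)) => [[t]|hemp].
    rewrite !in_setD1 => /and3P [ty tx tX].
    have tn : t \notin [set x; y] by rewrite !inE negb_or tx ty.
    have tA := XA t tX; have tF := XF t tX; have tS := XnSf t tX.
    apply: (connect_trans (y := t)).
      apply: edge_conn; rewrite ?xA ?tA ?xS ?tS ?adjF ?F_Snew ?xF ?tF //; try by [rewrite -E; apply: pair_ne | rewrite -E; apply: pair_ne' | rewrite eq_sym].
      all: try by [rewrite -E; apply: pair_ne | rewrite -E; apply: pair_ne' | rewrite eq_sym].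
    apply: edge_conn; rewrite ?tA ?yA ?tS ?yS ?adjF ?F_Snew ?tF ?yF //.
    all: try by [rewrite -E; apply: pair_ne | rewrite -E; apply: pair_ne' | rewrite eq_sym].
  have sub : FF :\: Sold \subset [set x; y].
    apply/subsetP => z zX; apply/negPn/negP => zn; apply: hemp; exists z.
    by move: zn zX; rewrite !inE !negb_or => /andP [-> ->].
  have c2 := subset_leq_card sub; rewrite cards2 in c2.
  have c2' : #|FF :\: Sold| <= 2 by apply: leq_trans c2 _; case: (x != y).
  have cP : 2 <= #|FF :&: Sold|.
    by move: cardPX c2'; move: #|FF :&: Sold| #|FF :\: Sold| => m n; clear; lia.
  have cP' := cardsD1 u (FF :&: Sold).
  have [p pP] : exists p, p \in FF :&: Sold :\ u.
    apply/set0Pn; rewrite -card_gt0; move: cP' cP; case: (u \in FF :&: Sold) => /=;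
    by move: #|FF :&: Sold| #|FF :&: Sold :\ u| => m n; clear; lia.
  move: pP; rewrite in_setD1 in_setI => /and3P [pu pF pS].
  have pA : p \in A :\ u by rewrite in_setD1 pu F_A.
  have pn : p \notin [set x; y].
    by rewrite !inE; apply/negP => /orP [] /eqP e; [move: (XnS x xX) | move: (XnS y yX)]; rewrite -e pS.
  have px : p != x by apply/eqP => e; move: pn; rewrite e !inE eqxx.
  have py : p != y by apply/eqP => e; move: pn; rewrite e !inE eqxx orbT.
  apply: (connect_trans (y := p)).
    apply: edge_conn; rewrite ?xA ?yA ?xS ?yS ?adjF ?F_Snew ?xF ?yF ?(eq_sym x) ?andbF //.
    all: try by [rewrite -E; apply: pair_ne | rewrite -E; apply: pair_ne' | rewrite eq_sym].
  apply: edge_conn; rewrite ?xA ?yA ?xS ?yS ?adjF ?F_Snew ?xF ?yF ?pS //.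
  all: try by [rewrite -E; apply: pair_ne | rewrite -E; apply: pair_ne' | rewrite eq_sym].

have reroute : forall u, u \notin FF :\: Sold -> forall x y, x \in A :\ u -> y \in A :\ u ->
    connect (rel_in A r) x y -> connect (rel_in (A :\ u) r) x y.
  move=> u uX x y xA yA /connectP [p pth yE].
  pose Q z := (z != u -> connect (rel_in (A :\ u) r) x z) /\
              (z = u -> forall t, t \in FF :\: Sold -> connect (rel_in (A :\ u) r) x t).
  have step : forall z z', rel_in A r z z' -> Q z -> Q z'.
    move=> z z' /and3P [zA z'A rzz'] [Q1 Q2]; split.
    - move=> z'u; case: (eqVneq z u) => [zu|zu].
        by subst z; apply: Q2 => //; apply: stepX uX rzz'.
      apply: connect_trans (Q1 zu) _; apply: connect1.
      by rewrite /rel_in !in_setD1 zu z'u zA z'A.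
    - move=> z'u; subst z'.
      have zX : z \in FF :\: Sold by apply: (stepX u z uX); rewrite r_sym.
      have zu : z != u by apply/eqP => e; move: uX; rewrite -e zX.
      move=> t tX; apply: connect_trans (Q1 zu) _.
      apply: (Xconn u uX) => //.
  have QP : forall z q, path (rel_in A r) z q -> Q z -> Q (last z q).
    move=> z q; elim: q z => [|z' q IH] z //= /andP [h1 h2] Qz.
    by apply: IH h2 (step _ _ h1 Qz).
  have Qx : Q x.
    split; first by move=> _; apply: connect0.
    by move=> e; move: xA; rewrite e in_setD1 eqxx.
  have [Q1 _] := QP _ _ pth Qx.
  rewrite yE; apply: Q1; rewrite -yE; move: yA; rewrite in_setD1 => /andP [hh _]; exact: hh.

have comp_le : forall u, u \notin FF :\: Sold ->
    #|components (A :\ u) r| <= #|components A r|.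
  move=> u uX; rewrite /components.
  set f := fun x => [set y in A :\ u | connect (rel_in (A :\ u) r) x y].
  set g := fun x => [set y in A | connect (rel_in A r) x y].
  pose h := fun C : {set V} => f (odflt u [pick z in C :&: (A :\ u)]).
  have fhg : {in A :\ u, f =1 h \o g}.
    move=> x xA; rewrite /h /=.
    case: pickP => [z /setIP [zg zA] | none] /=; last first.
      have xA' : x \in A by move: xA; rewrite in_setD1 => /andP [_ ->].
      by move: (none x); rewrite in_setI xA andbT /g inE xA' connect0.
    have cxz : connect (rel_in (A :\ u) r) x z.
      apply: reroute => //; move: zg; rewrite /g inE => /andP [_ ->] //.
    by apply/setP => y; rewrite /f !inE (same_connect (cS _) cxz).
  apply: (@leq_trans #|[set g x | x in A :\ u]|).
    rewrite (eq_in_imset fhg) imset_comp; exact: leq_imset_card.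
  apply: subset_leq_card; apply: imsetS; exact: subD1set.

have wX : w \in FF :\: Sold.
  by apply/negPn/negP => h; have := comp_le w h; rewrite leqNgt hcut.
split => // C /imsetP [x xA ->].
have wS : (w \in Sold) = false by move: wX; rewrite in_setD => /andP [/negbTE].
have SA : forall p, p \in FF :&: Sold -> p \in A :\ w.
  move=> p; rewrite in_setI => /andP [pF pS]; rewrite in_setD1 F_A // andbT.
  by apply/eqP => e; move: pS; rewrite e wS.
suff [p [pS pA cxp]] : exists p, [/\ p \in Sold, p \in A :\ w & connect (rel_in (A :\ w) r) x p].
  by apply/set0Pn; exists p; rewrite in_setI inE pA cxp pS.
case xS: (x \in Sold).
  by exists x; split => //; apply: connect0.
have xX : x \in FF :\: Sold.
  by apply: nS_X; [apply: A_Snew; move: xA; rewrite in_setD1 => /andP [_ ->] | rewrite xS].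
have xF : x \in FF by move: xX; rewrite in_setD => /andP [].
move: (p0P); rewrite in_setI => /andP [p0F p0S].
have p0x : p0 != x by apply/eqP => e; move: p0S; rewrite e xS.
case: (boolP ([set x; p0] != [set a; b])) => [hne|].
  exists p0; split => //; first exact: SA.
  apply: edge_conn; rewrite ?xA ?SA ?adjF ?F_Snew ?xS ?p0S //; last by rewrite eq_sym.
rewrite negbK => /eqP E.
case: (eqVneq (FF :&: Sold :\ p0) set0) => [hemp|/set0Pn [p1]]; last first.
  rewrite in_setD1 in_setI => /and3P [p10 p1F p1S].
  have p1x : p1 != x by apply/eqP => e; move: p1S; rewrite e xS.
  exists p1; split => //; first by apply: SA; rewrite in_setI p1F.
  apply: edge_conn; rewrite ?xA ?SA ?adjF ?F_Snew ?xS ?p1S ?in_setI ?p1F //; try by rewrite eq_sym.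
  by rewrite -E; apply: pair_ne; rewrite !inE negb_or p1x.
have cP := cardsD1 p0 (FF :&: Sold); rewrite p0P hemp cards0 in cP.
have cX3 : 3 <= #|FF :\: Sold|.
  by move: cardPX; rewrite cP; move: #|FF :\: Sold| => n; clear; lia.
have c1 := cardsD1 x (FF :\: Sold); have c2 := cardsD1 w (FF :\: Sold :\ x).
have [t tX] : exists t, t \in FF :\: Sold :\ x :\ w.
  apply/set0Pn; rewrite -card_gt0; move: cX3 c1 c2; rewrite xX.
  case: (w \in FF :\: Sold :\ x); rewrite /nat_of_bool;
  by move: #|FF :\: Sold| #|FF :\: Sold :\ x| #|FF :\: Sold :\ x :\ w| => n1 n2 n3 /= h1 h2 h3; clear -h1 h2 h3; simpl in *; lia.
move: tX; rewrite !in_setD1 => /and3P [tw tx tX].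
have tF : t \in FF by move: tX; rewrite in_setD => /andP [].
have tS : (t \in Sold) = false by move: tX; rewrite in_setD => /andP [/negbTE].
have tA : t \in A :\ w by rewrite in_setD1 tw F_A.
have tn : t \notin [set x; p0].
  by rewrite !inE negb_or tx; apply/eqP => e; move: tS; rewrite e p0S.
exists p0; split => //; first exact: SA.
apply: (connect_trans (y := t)).
  apply: edge_conn; rewrite ?xA ?tA ?adjF ?F_Snew ?xS ?tS //; try by rewrite eq_sym.
  by rewrite -E; apply: pair_ne.
apply: edge_conn; rewrite ?tA ?SA ?adjF ?F_Snew ?tS ?p0S //.
  by apply/eqP => e; move: tS; rewrite e p0S.
by rewrite -E; apply: pair_ne'.
Qed.
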